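(* Let $v_1,\dots,v_m\in\mathbb{C}^d$ with $m$ even, $\sum_{i=1}^m v_iv_i^*=\mathbb{I}$, $\|v_i\|^2=\alpha$ for all $i$, and $\alpha\le\frac{1}{221d}$. Run Algorithm 1 (described in the context) and fix an iteration $0\le j<m/2$. Suppose that for every $0\le j'\le j$ we have $u_{j'}-\lambda_{\max}(A_{j'})\ge 1/3$ and $\kappa(u_{j'}\mathbb{I}-A_{j'})\le 3/2$. Write $A=A_j$, $\mathcal{B}=\mathcal{B}_j$, $\widehat u=u_{j+1}$. Then \[ \sum_{v\in\mathcal{B}}\log\Big(1-v^*(\widehat u\mathbb{I}-A)^{-1}v\Big)\ge\frac1\alpha\cdot\mathrm{tr}\Big[(\mathbb{I}-A)\cdot\log\big(\mathbb{I}-\alpha(\widehat u\mathbb{I}-A)^{-1}\big)\Big]. \]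
   Context: $\log$ of a positive definite matrix denotes the matrix logarithm. Algorithm 1: set $A_0=\mathbf{0}_{d\times d}$, $\mathcal{A}_0=\emptyset$, $\mathcal{B}_0=\{v_1,\dots,v_m\}$, $u_0=1/2$, $\delta_u=\alpha/d$. For $j=0,\dots,m/2-1$: set $u_{j+1}=u_j+\delta_u$; choose $v_j\in\mathcal{B}_j$ maximising $\det(u_{j+1}\mathbb{I}-A_j-vv^* )$ over $v\in\mathcal{B}_j$ (ties arbitrary); set $A_{j+1}=A_j+v_jv_j^*$, $\mathcal{A}_{j+1}=\mathcal{A}_j\cup\{v_j\}$, $\mathcal{B}_{j+1}=\mathcal{B}_j\setminus\{v_j\}$. $\kappa(B)=\lambda_{\max}(B)/\lambda_{\min}(B)$ for Hermitian positive definite $B$. *)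

(* Defs.v *)
From HB Require Import structures.
From mathcomp Require Import all_boot all_order all_algebra.
From mathcomp Require Import sesquilinear spectral.
From mathcomp Require Import complex.
From mathcomp Require Import reals exp.
Set Implicit Arguments.
Unset Strict Implicit.
Unset Printing Implicit Defensive.
Import Order.TTheory GRing.Theory Num.Theory.
Local Open Scope ring_scope.
Local Open Scope complex_scope.

Section Defs.
Variable R : realType.
Local Notation C := R[i].

Definition adj {m n} (M : 'M[C]_(m, n)) : 'M[C]_(n, m) := map_mx (@Num.conj C) (M ^T).

(* real parts of the eigenvalues of a (Hermitian) matrix, via the spectral
   decomposition B = P^-1 diag(sp) P of mathcomp's spectral.v *)
Definition eigs {n} (B : 'M[C]_n) : seq R :=
  [seq complex.Re (spectral_diag B 0 i) | i <- enum 'I_n].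

Definition lambda_max {n} (B : 'M[C]_n) : R :=
  foldr Num.max (head 0 (eigs B)) (eigs B).
Definition lambda_min {n} (B : 'M[C]_n) : R :=
  foldr Num.min (head 0 (eigs B)) (eigs B).

Definition kappa {n} (B : 'M[C]_n) : R := lambda_max B / lambda_min B.

(* matrix logarithm of a Hermitian positive definite matrix, by
   functional calculus on the spectral decomposition *)
Definition logm {n} (B : 'M[C]_n) : 'M[C]_n :=
  invmx (spectralmx B)
  *m diag_mx (\row_i (ln (complex.Re (spectral_diag B 0 i)))%:C)
  *m spectralmx B.

(* ---- Algorithm 1 ----
   A run is described by the sequence sel of chosen indices (v_{sel j} is the
   vector chosen at iteration j). *)
Definition u_ (alpha : R) (d j : nat) : R := 1/2 + j%:R * (alpha / d%:R).

Definition Aj {d m} (v : 'I_m -> 'cV[C]_d) (sel : nat -> 'I_m) (j : nat)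
  : 'M[C]_d := \sum_(k < j) (v (sel k) *m adj (v (sel k))).

Definition Bj {m} (sel : nat -> 'I_m) (j : nat) : {set 'I_m} :=
  [set i | [forall k : 'I_j, sel k != i]].

(* sel is a valid run of Algorithm 1 (ties broken arbitrarily) *)
Definition alg1_run {d m} (alpha : R) (v : 'I_m -> 'cV[C]_d)
  (sel : nat -> 'I_m) : Prop :=
  forall j, (j < m./2)%N ->
    sel j \in Bj sel j /\
    forall i, i \in Bj sel j ->
      \det ((u_ alpha d j.+1)%:C%:M - Aj v sel j - v i *m adj (v i))
      <= \det ((u_ alpha d j.+1)%:C%:M - Aj v sel j - v (sel j) *m adj (v (sel j))).

End Defs.

(* Main.v *)
Require Import Defs.
From HB Require Import structures.
From mathcomp Require Import all_boot all_order all_algebra.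
From mathcomp Require Import sesquilinear spectral.
From mathcomp Require Import complex.
From mathcomp Require Import reals exp.
Import Order.TTheory GRing.Theory Num.Theory.
Local Open Scope ring_scope.
Local Open Scope complex_scope.

From mathcomp Require Import lra.
Section Helpers.
Context {R : realType}.
Local Notation C := R[i].

Lemma adjE m n (M : 'M[C]_(m, n)) : adj M = (M ^t*)%sesqui.
Proof. by []. Qed.

Lemma adjM m n p (A : 'M[C]_(m, n)) (B : 'M[C]_(n, p)) :
  adj (A *m B) = adj B *m adj A.
Proof. by rewrite /adj trmx_mul map_mxM. Qed.

Lemma adjK m n (A : 'M[C]_(m, n)) : adj (adj A) = A.
Proof. by rewrite /adj; apply/matrixP=> i k; rewrite !mxE conjCK. Qed.

Lemma adjD m n (A B : 'M[C]_(m, n)) : adj (A + B) = adj A + adj B.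
Proof. by apply/matrixP=> i k; rewrite !mxE rmorphD. Qed.

Lemma adjN m n (A : 'M[C]_(m, n)) : adj (- A) = - adj A.
Proof. by apply/matrixP=> i k; rewrite !mxE rmorphN. Qed.

Lemma adj_sum m n I (r : seq I) (P : pred I) (F : I -> 'M[C]_(m, n)) :
  adj (\sum_(i <- r | P i) F i) = \sum_(i <- r | P i) adj (F i).
Proof.
elim/big_rec2: _ => [|i x y _ <-]; last by rewrite adjD.
by apply/matrixP=> i k; rewrite !mxE rmorph0.
Qed.

Lemma adj_scalar n (c : R) : adj (c%:C%:M : 'M[C]_n) = c%:C%:M.
Proof.
by rewrite /adj tr_scalar_mx map_scalar_mx; congr (_%:M); exact: conjc_real.
Qed.

Lemma wt_def (z : C) : Num.conj z * z = ((complex.Re z)^+2 + (complex.Im z)^+2)%:C.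
Proof.
case: z => a b; have ->: Num.conj (a +i* b) = a -i* b by [].
by simpc; rewrite /= [b * a]mulrC subrr -!expr2.
Qed.

Definition wt (z : C) : R := (complex.Re z)^+2 + (complex.Im z)^+2.
Lemma wt_ge0 z : 0 <= wt z.
Proof. by rewrite /wt addr_ge0 ?sqr_ge0. Qed.

Lemma normsq n (u : 'cV[C]_n) :
  (adj u *m u) 0 0 = (\sum_k wt (u k 0))%:C.
Proof.
rewrite mxE rmorph_sum; apply: eq_bigr => k _.
by rewrite /adj !mxE wt_def.
Qed.

Lemma quadform {n} (U : 'M[C]_n) (r : 'I_n -> R) (u : 'cV[C]_n) :
  (adj u *m (adj U *m diag_mx (\row_k (r k)%:C) *m U) *m u) 0 0
  = (\sum_k r k * wt ((U *m u) k 0))%:C.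
Proof.
rewrite !mulmxA -adjM -!mulmxA mulmxA; set y := U *m u.
rewrite mul_mx_diag [LHS]mxE rmorph_sum.
apply: eq_bigr => k _; rewrite mxE /adj !mxE rmorphM /= -wt_def.
by rewrite mulrAC mulrC.
Qed.


Lemma spec_uu n (H : 'M[C]_n) : spectralmx H *m adj (spectralmx H) = 1%:M.
Proof. exact/unitarymxP/spectral_unitarymx. Qed.

Lemma spec_inv n (H : 'M[C]_n) : invmx (spectralmx H) = adj (spectralmx H).
Proof. exact/invmx_unitary/spectral_unitarymx. Qed.

Lemma spec_uu' n (H : 'M[C]_n) : adj (spectralmx H) *m spectralmx H = 1%:M.
Proof. by rewrite -spec_inv mulVmx ?spectral_unit. Qed.

Lemma adj_diag n (r : 'I_n -> R) :
  adj (diag_mx (\row_k (r k)%:C)) = diag_mx (\row_k (r k)%:C).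
Proof.
apply/matrixP=> i k; rewrite /adj !mxE.
case: (eqVneq k i) => [->|ne]; rewrite ?eqxx ?(negPf ne) /=.
  by rewrite !mulr1n; exact: conjc_real.
by rewrite !mulr0n rmorph0.
Qed.

Lemma adj_hform n (U : 'M[C]_n) (r : 'I_n -> R) :
  adj (adj U *m diag_mx (\row_k (r k)%:C) *m U) = adj U *m diag_mx (\row_k (r k)%:C) *m U.
Proof. by rewrite !adjM adjK adj_diag mulmxA. Qed.

Lemma herm_decomp n (H : 'M[C]_n) : adj H = H ->
  H = adj (spectralmx H) *m diag_mx (\row_k (complex.Re (spectral_diag H 0 k))%:C)
      *m spectralmx H.
Proof.
move=> hH.
have nH : H \is normalmx by apply/normalmxP; rewrite -adjE hH.
have eH := orthomx_spectralP nH; rewrite spec_inv in eH.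
set U := spectralmx H in eH *; set c := spectral_diag H in eH *.
have eD : diag_mx c = U *m H *m adj U.
  by rewrite eH !mulmxA spec_uu mul1mx -mulmxA spec_uu mulmx1.
have aD : adj (diag_mx c) = diag_mx c by rewrite eD !adjM adjK hH mulmxA.
suff -> : \row_k (complex.Re (c 0 k))%:C = c by [].
apply/rowP => k; rewrite mxE.
have /matrixP /(_ k k) := aD; rewrite /adj !mxE eqxx !mulr1n.
case: (c 0 k) => a b.
have -> : Num.conj (a +i* b) = a -i* b by [].
by case=> /eqP; rewrite eqNr => /eqP ->.
Qed.

Lemma jensen_ln n (w mu : 'I_n -> R) :
  (forall k, 0 <= w k) -> (forall k, 0 < mu k) -> 0 < \sum_k w k ->
  (\sum_k w k)^-1 * (\sum_k ln (mu k) * w k)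
    <= ln ((\sum_k mu k * w k) / \sum_k w k).
Proof.
move=> w0 mu0 s0; set s := \sum_k w k; set S := \sum_k mu k * w k.
have S0 : 0 < S.
  rewrite lt_def sumr_ge0 ?andbT => [|k _]; last by rewrite mulr_ge0 // ltW.
  apply/negP => /eqP H0; have H := psumr_eq0P (fun k _ => mulr_ge0 (ltW (mu0 k)) (w0 k)) H0.
  have : s = 0.
    rewrite /s big1 // => k _; have := H k isT.
    by move/eqP; rewrite mulf_eq0 gt_eqF //= => /eqP.
  by move=> s_0; move: s0; rewrite -/s s_0 ltxx.
set T := S / s.
have T0 : 0 < T by rewrite divr_gt0.
have key k : ln (mu k) * w k <= (ln T + (mu k / T - 1)) * w k.
  apply: ler_wpM2r => //.
  have h1 : -1 < mu k / T - 1 by rewrite ltrBrDr addrC subrr divr_gt0.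
  have := le_ln1Dx h1; rewrite addrC subrK ln_div ?posrE //.
  by rewrite lerBlDl.
rewrite ler_pdivrMl // (le_trans (ler_sum _ (fun k _ => key k))) //.
under eq_bigr => k _ do rewrite mulrDl mulrBl mul1r.
rewrite big_split /= sumrB -mulr_sumr -/s.
rewrite [X in _ + (X - _)](_ : _ = S / T); last first.
  by rewrite /S mulr_suml; apply: eq_bigr => k _; rewrite mulrAC.
rewrite /T invf_div mulrCA divff ?gt_eqF // mulr1 -/s subrr addr0 mulrC.
by [].
Qed.

Definition hform n (U : 'M[C]_n) (r : 'I_n -> R) :=
  adj U *m diag_mx (\row_k (r k)%:C) *m U.
Arguments hform {n}.

Lemma hformB n (U : 'M[C]_n) r s :
  hform U r - hform U s = hform U (fun k => r k - s k).
Proof.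
rewrite /hform -mulmxBl -mulmxBr; congr (_ *m _ *m _); apply/matrixP=> i k.
rewrite !mxE; case: (i == k); rewrite ?mulr1n ?mulr0n ?subr0 //.
by rewrite rmorphB.
Qed.

Lemma hform_const {n} {U : 'M[C]_n} x : adj U *m U = 1%:M ->
  hform U (fun _ => x) = x%:C%:M.
Proof.
move=> hU; rewrite /hform (_ : diag_mx _ = x%:C%:M).
  by rewrite -mulmxA -scalar_mxC mulmxA hU mul1mx.
by rewrite -diag_const_mx; congr diag_mx; apply/rowP=> k; rewrite !mxE.
Qed.

Lemma hformZ n (U : 'M[C]_n) x r :
  x%:C *: hform U r = hform U (fun k => x * r k).
Proof.
rewrite /hform scalemxAl scalemxAr; congr (_ *m _ *m _); apply/matrixP=> i k.
rewrite !mxE; case: (i == k); rewrite ?mulr1n ?mulr0n ?mulr0 //.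
by rewrite rmorphM.
Qed.

Lemma hformM n (U : 'M[C]_n) r s : U *m adj U = 1%:M ->
  hform U r *m hform U s = hform U (fun k => r k * s k).
Proof.
move=> hU; rewrite /hform !mulmxA -[_ *m U *m adj U]mulmxA hU mulmx1.
rewrite -[_ *m diag_mx _ *m diag_mx _]mulmxA mulmx_diag; congr (_ *m _ *m _).
by congr diag_mx; apply/rowP=> k; rewrite !mxE rmorphM.
Qed.

Lemma le_foldr_max (s : seq R) y x : x \in s -> x <= foldr Num.max y s.
Proof.
elim: s => //= b s IH; rewrite in_cons => /orP[/eqP->|/IH h].
  by rewrite le_max lexx.
by rewrite le_max h orbT.
Qed.

Lemma quad_row {n} (P B : 'M[C]_n) k :
  (row k P *m B *m adj (row k P)) 0 0 = (P *m B *m adj P) k k.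
Proof.
have -> : adj (row k P) = col k (adj P) by apply/matrixP => i l; rewrite !mxE.
rewrite -row_mul !mxE; apply: eq_bigr => l _; rewrite !mxE; reflexivity.
Qed.

Lemma normU n (U : 'M[C]_n) (u : 'cV[C]_n) : adj U *m U = 1%:M ->
  \sum_k wt ((U *m u) k 0) = \sum_k wt (u k 0).
Proof.
move=> hU; apply: complexI; rewrite -!normsq adjM.
by rewrite -mulmxA [adj U *m _]mulmxA hU mul1mx.
Qed.

Lemma mxEB m n (A B : 'M[C]_(m, n)) i k : (A - B) i k = A i k - B i k.
Proof. by rewrite !mxE. Qed.

Lemma mxEZ m n a (A : 'M[C]_(m, n)) i k : (a *: A) i k = a * A i k.
Proof. by rewrite !mxE. Qed.

End Helpers.
Arguments hform {R n}.

Theorem lemma3p3 (R : realType) (d m : nat) (v : 'I_m -> 'cV[R[i]]_d)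
  (alpha : R) (sel : nat -> 'I_m) (j : nat) :
  (0 < d)%N ->
  ~~ odd m ->
  \sum_(i < m) (v i *m adj (v i)) = 1%:M ->
  (forall i, (adj (v i) *m v i) 0 0 = alpha%:C) ->
  alpha <= 1 / (221 * d%:R) ->
  alg1_run alpha v sel ->
  (j < m./2)%N ->
  (forall j', (j' <= j)%N ->
     u_ alpha d j' - lambda_max (Aj v sel j') >= 1/3 /\
     kappa ((u_ alpha d j')%:C%:M - Aj v sel j') <= 3/2) ->
  let A := Aj v sel j in
  let uh := u_ alpha d j.+1 in
  \sum_(x in Bj sel j)
     ln (1 - complex.Re ((adj (v x) *m invmx (uh%:C%:M - A) *m v x) 0 0))
  >= alpha^-1 *
     complex.Re (\tr ((1%:M - A) *m logm (1%:M - alpha%:C *: invmx (uh%:C%:M - A)))).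
Proof.
move=> d0 _ hsum hnorm halpha hrun hj hhyp; cbv zeta.
set A := Aj v sel j; set uh := u_ alpha d j.+1.
have tr1 (u : 'cV[R[i]]_d) : \tr (u *m adj u) = (adj u *m u) 0 0.
  by rewrite mxtrace_mulC /mxtrace big_ord1.
have apos : 0 < alpha.
  have := congr1 mxtrace hsum; rewrite mxtrace1 raddf_sum /=.
  under eq_bigr => i _ do rewrite tr1 hnorm.
  rewrite sumr_const card_ord -rmorphMn /= -(rmorph_nat (real_complex R)) => /complexI.
  rewrite -mulr_natr => h.
  have hd : (0 < d%:R :> R) by rewrite ltr0n.
  have hm : (0 <= m%:R :> R) by rewrite ler0n.
  nra.
have a3 : 3 * alpha < 1.
  have h1 : alpha * (221 * d%:R) <= 1.
    by rewrite -ler_pdivlMr ?mulr_gt0 ?ltr0n // mul1r -[X in _ <= X]mul1r.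
  have hd : (1 <= d%:R :> R) by rewrite ler1n.
  nra.
have hA : adj A = A.
  by rewrite /A /Aj adj_sum; apply: eq_bigr => k _; rewrite adjM adjK.
have inj : {in [set: 'I_j] &, injective (fun k : 'I_j => sel k)}.
  have H (k1 k2 : nat) : (k1 < k2)%N -> (k2 < j)%N -> sel k1 != sel k2.
    move=> lt lt2; have [hB _] := hrun k2 (ltn_trans lt2 hj).
    by move: hB; rewrite inE => /forallP /(_ (Ordinal lt)).
  move=> k1 k2 _ _ /= e; apply/val_inj => /=.
  case: (ltngtP k1 k2) => // lt.
    by have := H _ _ lt (ltn_ord k2); rewrite e eqxx.
  by have := H _ _ lt (ltn_ord k1); rewrite e eqxx.
have hIA : 1%:M - A = \sum_(x in Bj sel j) v x *m adj (v x).
  rewrite -hsum (bigID (fun i => i \in Bj sel j)) /=.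
  suff -> : \sum_(i < m | i \notin Bj sel j) v i *m adj (v i) = A by rewrite addrK.
  rewrite (eq_bigl (fun i => i \in [set sel (val k) | k in [set: 'I_j]])); last first.
    move=> i; rewrite inE negb_forall; apply/existsP/imsetP.
      by case=> k /negPn /eqP <-; exists k; rewrite ?inE.
    by case=> k _ ->; exists k; rewrite eqxx.
  by rewrite (big_imset _ inj) /=; apply: eq_bigl => k; rewrite inE.
pose Q := spectralmx A.
pose a k := complex.Re (spectral_diag A 0 k).
have hAQ : A = hform Q a by exact: herm_decomp.
have ha_le k : a k <= lambda_max A.
  apply: le_foldr_max; rewrite /eigs; apply/mapP; exists k => //.
  by rewrite mem_enum.
have hu := (hhyp j (leqnn j)).1.
have huh : uh = u_ alpha d j + alpha / d%:R.
  by rewrite /uh /u_ -[j.+1]addn1 natrD mulrDl !mul1r addrA.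
have ad0 : 0 <= alpha / d%:R by rewrite divr_ge0 ?ler0n // ltW.
pose c k := uh - a k.
have hc k : 1/3 <= c k.
  by have := ha_le k; rewrite /c huh; lra.
have hQ1 : adj Q *m Q = 1%:M by exact: spec_uu'.
have hQ2 : Q *m adj Q = 1%:M by exact: spec_uu.
have hM : uh%:C%:M - A = hform Q c.
  by rewrite hAQ -(hform_const uh hQ1) hformB.
have hc0 k : c k != 0 by apply/negP => /eqP h; have := hc k; rewrite h; lra.
have hN : invmx (uh%:C%:M - A) = hform Q (fun k => (c k)^-1).
  have e : (uh%:C%:M - A) *m hform Q (fun k => (c k)^-1) = 1%:M.
    rewrite hM hformM // -(hform_const 1 hQ1) /hform.
    by congr (_ *m diag_mx _ *m _); apply/rowP => k; rewrite !mxE divff.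
  have [u1 _] := mulmx1_unit e.
  by rewrite -[RHS](mulKmx u1) e mulmx1.
have hX : 1%:M - alpha%:C *: invmx (uh%:C%:M - A)
          = hform Q (fun k => 1 - alpha * (c k)^-1).
  by rewrite hN hformZ -(hform_const 1 hQ1) hformB.
set X := 1%:M - alpha%:C *: invmx (uh%:C%:M - A).
have hXa : adj X = X by rewrite /X hX /hform adj_hform.
pose P := spectralmx X.
pose mu k := complex.Re (spectral_diag X 0 k).
have hXP : X = hform P mu by exact: herm_decomp.
have hP1 : adj P *m P = 1%:M by exact: spec_uu'.
have hP2 : P *m adj P = 1%:M by exact: spec_uu.
have hci l : (c l)^-1 <= 3.
  have := hc l => hcl.
  by rewrite -[_^-1]mul1r ler_pdivrMr; lra.
have hmu k : 1 - 3 * alpha <= mu k.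
  pose u := adj (row k P).
  have e1 : (adj u *m X *m u) 0 0 = (mu k)%:C.
    rewrite /u adjK quad_row hXP /hform !mulmxA hP2 mul1mx -mulmxA hP2 mulmx1.
    by rewrite !mxE eqxx mulr1n.
  have e2 : (\sum_l wt ((Q *m u) l 0)) = 1.
    apply: complexI; rewrite normU // -normsq /u adjK.
    have := quad_row P 1%:M k; rewrite !mulmx1 => ->.
    by rewrite hP2 mxE eqxx.
  have e3 := quadform Q (fun k => 1 - alpha * (c k)^-1) u.
  rewrite -/(hform _ _) -hX -/X e1 in e3.
  have -> : mu k = \sum_l (1 - alpha * (c l)^-1) * wt ((Q *m u) l 0).
    by case: e3.
  rewrite -[1 - 3 * alpha]mulr1 -e2 mulr_sumr ler_sum // => l _.
  rewrite ler_wpM2r ?wt_ge0 //.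
  have := hci l => h; nra.
have hmu0 k : 0 < mu k by have := hmu k; lra.
have hL : logm X = hform P (fun k => ln (mu k)) by rewrite /logm spec_inv.
rewrite hL hIA mulmx_suml.
rewrite (_ : \tr _ = \sum_(x in Bj sel j)
   \tr (v x *m adj (v x) *m hform P (fun k => ln (mu k)))); last first.
  by rewrite raddf_sum.
under eq_bigr => x _ do
  rewrite -mulmxA mxtrace_mulC /mxtrace big_ord1 /hform quadform.
rewrite -rmorph_sum /= mulr_sumr; apply: ler_sum => x _.
set N := invmx (uh%:C%:M - A).
pose w k := wt ((P *m v x) k 0).
have sw : \sum_k w k = alpha.
  by apply: complexI; rewrite /w normU // -normsq hnorm.
set q := (adj (v x) *m N *m v x) 0 0.
pose S := \sum_k mu k * w k.
have e' : (adj (v x) *m X *m v x) 0 0 = S%:C by rewrite {1}hXP quadform.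
have e : (adj (v x) *m X *m v x) 0 0 = alpha%:C - alpha%:C * q.
  by rewrite /X mulmxBr mulmxBl mulmx1 -scalemxAr -scalemxAl mxEB mxEZ hnorm.
have hq : q = ((alpha - S) / alpha)%:C.
  have a0 : alpha%:C != 0 :> R[i].
    apply/negP => /eqP h; have := congr1 (@complex.Re R) h; rewrite /= => h'.
    by move: apos; rewrite h' ltxx.
  apply: (mulfI a0); rewrite rmorphM fmorphV rmorphB /= mulrCA divff // mulr1.
  by move: e; rewrite e' => ->; rewrite opprB addrC subrK.
rewrite hq /= (_ : 1 - (alpha - S) / alpha = S / alpha); last first.
  by rewrite mulrBl divff ?gt_eqF // opprB addrC subrK.
have := @jensen_ln R d w mu (fun k => wt_ge0 _) hmu0.
by rewrite sw; apply.
Qed.
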